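(* Let $N\ge3$ be odd, $K=\tilde F(N)$, and let $\mathcal{F}$ be a $K\times N$ circular Florentine rectangle over $\mathbb{Z}_N$ with rows $\pi_0,\dots,\pi_{K-1}$; put $g_{i,j}=\pi_i^{-1}(j)$. Let $T\ge1$, $P=N+T$, $L=NP$, $\mathcal{I}\subseteq\mathbb{Z}_P$ with $|\mathcal{I}|=T$, and $\mathbb{Z}_P\setminus\mathcal{I}=\{l_0<\dots<l_{N-1}\}$. Let $\mathcal{H}=(h_{c,s})_{0\le c,s<N}$ be a complex matrix with $|h_{c,s}|=1$ for all $c,s$ and $\sum_{s=0}^{N-1}h_{c_0,s}h^*_{c_1,s}=0$ for $c_0\ne c_1$ (e.g. the unnormalized DFT matrix). For $0\le i<K$, $0\le c<N$, define the $N\times P$ matrix $\mathcal{D}^i_c=(d^{i,c}_{j,k})$ by $d^{i,c}_{j,k}=\sqrt{P/N}\,\omega_N^{j g_{i,t}}h_{c,t}$ if $k=l_t$, and $d^{i,c}_{j,k}=0$ if $k\in\mathcal{I}$; let $\hat u^{i,c}_n=d^{i,c}_{r,s}$ with $r=\lfloor n/P\rfloor$, $s=n-Pr$ ($0\le n<L$), let $U^{i,c}$ be the time-domain sequence $u^{i,c}_t=\frac{1}{\sqrt L}\sum_{n=0}^{L-1}\hat u^{i,c}_n\omega_L^{nt}$, and let $\mathcal{U}^i=\{U^{i,c}:0\le c<N\}$. Then: (0) every $U^{i,c}$ is unimodular; (1) with $\Omega=\{s+aP:s\in\mathcal{I},a\in\mathbb{Z}_N\}$, $\hat u^{i,c}_n=0$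 for $n\in\Omega$ and $|\hat u^{i,c}_n|=\sqrt{P/N}$ for $n\notin\Omega$; (2) each $\mathcal{U}^i$ is an $(N,NP,N)$-ZCZ sequence set, i.e. $\theta_{U^{i,c}}(\tau)=0$ for $0<\tau<N$ and $\theta_{U^{i,c_0},U^{i,c_1}}(\tau)=0$ for $c_0\ne c_1$ and $0\le\tau<N$; in particular $NP-|\Omega|=N^2=MZ$ with $M=Z=N$; (3) $|\theta_{U^{i,c_0},U^{i',c_1}}(\tau)|=P=\frac{NP}{\sqrt{NP-|\Omega|}}$ for all $0\le i\ne i'<K$, all $0\le c_0,c_1<N$ and all $0\le\tau<L$.
   Context: $\omega_n=e^{2\pi\sqrt{-1}/n}$. An $M\times N$ circular Florentine rectangle (CFR) over $\mathbb{Z}_N$ is an $M\times N$ array whose rows $\pi_i:\mathbb{Z}_N\to\mathbb{Z}_N$ are permutations such that for every $m\in\mathbb{Z}_N\setminus\{0\}$ and all $i,j,x,y$: $(\pi_i(x),\pi_i(x+m))=(\pi_j(y),\pi_j(y+m))$ (indices mod $N$) iff $i=j$ and $x=y$. $\tilde F(N)$ is the largest $M$ for which an $M\times N$ CFR exists (for odd $N\ge3$, $\tilde F(N)\ge2$). $\pi_i^{-1}$ is the inverse permutation with values in $\{0,\dots,N-1\}$. Periodic correlation: $\theta_{C,D}(\tau)=\sum_{t=0}^{L-1}c_td^*_{\langle t+\tau\rangle_L}$, $\theta_C=\theta_{C,C}$. An $(M,L,Z)$-ZCZ set is a set of $M$ length-$L$ sequences whose autocorrelations vanish for $0<\tau<Z$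 and whose pairwise cross-correlations vanish for $0\le\tau<Z$. *)

(* Defs.v *)
From HB Require Import structures.
From mathcomp Require Import all_boot all_order all_algebra.
From mathcomp Require Import fingroup perm algC.
Set Implicit Arguments. Unset Strict Implicit. Unset Printing Implicit Defensive.
Import Order.TTheory GRing.Theory Num.Theory.
Local Open Scope ring_scope.

(* omega n = e^{2 pi i / n}: n.-root (-1) is the n-th root of -1 with minimal
   non-negative argument, i.e. e^{i pi / n}; its square is e^{2 pi i / n}. *)
Definition omega (n : nat) : algC := (n.-root (-1)) ^+ 2.

Definition addI (N : nat) (x m : 'I_N) : 'I_N :=
  Ordinal (ltn_pmod (x + m) (leq_ltn_trans (leq0n x) (ltn_ord x))).

Definition is_CFR (N M : nat) (pi : 'I_M -> {perm 'I_N}) : Prop :=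
  forall m : 'I_N, nat_of_ord m != 0%N ->
  forall (i j : 'I_M) (x y : 'I_N),
    (pi i x, pi i (addI x m)) = (pi j y, pi j (addI y m)) <-> (i = j /\ x = y).

Definition CFR_exists (N M : nat) : Prop := exists pi : 'I_M -> {perm 'I_N}, is_CFR pi.

Definition is_Ftilde (N K : nat) : Prop :=
  CFR_exists N K /\ forall M, CFR_exists N M -> (M <= K)%N.

Definition ginv (N K : nat) (pi : 'I_K -> {perm 'I_N}) (i : 'I_K) (j : 'I_N) : nat :=
  nat_of_ord ((pi i)^-1%g j).

(* entry d^{i,c}_{j,k} of D^i_c, with l_t the t-th element of Z_P \ I *)
Definition dentry (N P K : nat) (pi : 'I_K -> {perm 'I_N}) (l : 'I_N -> 'I_P)
    (h : 'I_N -> 'I_N -> algC) (i : 'I_K) (c : 'I_N) (j k : nat) : algC :=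
  if [pick t : 'I_N | nat_of_ord (l t) == k] is Some t then
    sqrtC (P%:R / N%:R) * omega N ^+ (j * ginv pi i t) * h c t
  else 0.

Definition uhat (N P K : nat) (pi : 'I_K -> {perm 'I_N}) (l : 'I_N -> 'I_P)
    (h : 'I_N -> 'I_N -> algC) (i : 'I_K) (c : 'I_N) (n : nat) : algC :=
  dentry pi l h i c (n %/ P) (n %% P).

Definition useq (N P K : nat) (pi : 'I_K -> {perm 'I_N}) (l : 'I_N -> 'I_P)
    (h : 'I_N -> 'I_N -> algC) (i : 'I_K) (c : 'I_N) (t : nat) : algC :=
  (sqrtC (N * P)%:R)^-1 *
    \sum_(n < N * P) uhat pi l h i c n * omega (N * P) ^+ (n * t).

Definition pcorr (L : nat) (C D : nat -> algC) (tau : nat) : algC :=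
  \sum_(t < L) C t * (D ((t + tau) %% L)%N)^*.

Definition OmegaSet (N P : nat) (I : {set 'I_P}) : {set 'I_(N * P)} :=
  [set n : 'I_(N * P) | [exists s : 'I_P, exists a : 'I_N,
      (s \in I) && (nat_of_ord n == s + a * P)%N]].

(* Main.v *)
Require Import Defs.
From HB Require Import structures.
From mathcomp Require Import all_boot all_order all_algebra.
From mathcomp Require Import fingroup perm algC.
From mathcomp Require Import cyclotomic.
From mathcomp Require Import ring lra zify.
Import Order.TTheory GRing.Theory Num.Theory.
Local Open Scope ring_scope.


Lemma unit_conj {x : algC} : `|x| = 1 -> x^* = x^-1.
Proof.
move=> nx; have xn0 : x != 0 by rewrite -normr_eq0 nx oner_eq0.
by rewrite invC_norm nx expr1n invr1 mul1r.
Qed.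

Lemma unit_mulV {x : algC} : `|x| = 1 -> x * x^* = 1.
Proof. by move=> nx; rewrite -normCK nx expr1n. Qed.

Lemma norm_root1 {x : algC} {n} : (0 < n)%N -> x ^+ n = 1 -> `|x| = 1.
Proof.
move=> n0 xn; apply/eqP; rewrite -(pexpr_eq1 n0) ?normr_ge0 //.
by rewrite -normrX xn normr1.
Qed.

Lemma norm_sub1 (x : algC) : `|x| = 1 -> `|1 - x| ^+ 2 = 2 - 2 * 'Re x.
Proof.
move=> nx; rewrite normCK rmorphB rmorph1 ReE.
have h := unit_mulV nx; rewrite [2 * _]mulrC.
rewrite divfK ?pnatr_eq0 // mulrBl !mulrBr mul1r mulr1 h.
ring.
Qed.

Lemma geom_sum (r : algC) q : r ^+ q = 1 -> r != 1 ->
  \sum_(k < q) r ^+ k = 0.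
Proof.
move=> rq r1; have := subrX1 r q; rewrite rq subrr => /esym/eqP.
by rewrite mulf_eq0 subr_eq0 (negbTE r1) => /eqP.
Qed.

Lemma norm_pow1 {x : algC} {n} : (0 < n)%N -> `|x ^+ n| = 1 -> `|x| = 1.
Proof.
move=> n0 xn; apply/eqP; rewrite -(pexpr_eq1 n0) ?normr_ge0 //.
by rewrite -normrX xn.
Qed.

Lemma rootQ (u : algC) (q : nat) : `|u| = 1 -> u != 1 -> (1 < q)%N ->
  exists z, z ^+ q = u /\ 'Re u < 'Re z.
Proof.
move=> nu u1 q1; have q0 : (0 < q)%N by apply: ltnW.
set z0 := q.-root u; have z0q : z0 ^+ q = u by rewrite /z0 rootCK.
have [rho prho] := C_prim_root_exists q0.
have rhoq := prim_expr_order prho.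
pose x (k : nat) := z0 * rho ^+ k.
have xq k : x k ^+ q = u by rewrite /x exprMn z0q exprAC rhoq expr1n mulr1.
have nx k : `|x k| = 1 by apply: (norm_pow1 q0); rewrite xq.
have nz0 : `|z0| = 1 by apply: (norm_pow1 q0); rewrite z0q.
have nrho : `|rho| = 1 by apply: (norm_pow1 q0); rewrite rhoq normr1.
have z0n0 : z0 != 0 by rewrite -normr_eq0 nz0 oner_eq0.
have rhon0 : rho != 0 by rewrite -normr_eq0 nrho oner_eq0.
case: (boolP [exists k : 'I_q, 'Re u < 'Re (x k)]) => [/existsP [k hk] | /existsPn hall].
  by exists (x k).
exfalso.
have hle (k : 'I_q) : 'Re (x k) <= 'Re u by rewrite real_leNgt ?Creal_Re ?hall.
pose G (y : algC) := \sum_(j < q) y ^+ j.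
have claim2 (k : 'I_q) : G (x k) * (G (x k))^* <= 1.
  rewrite -normCK; apply: exprn_ile1 => //.
  have e : (1 - x k) * G (x k) = 1 - u.
    have := subrX1 (x k) q; rewrite (xq k) /G => h.
    by rewrite -opprB mulNr -h opprB.
  have hpos : 0 < `|1 - u| by rewrite normr_gt0 subr_eq0 eq_sym.
  have hsq : `|1 - u| <= `|1 - x k|.
    rewrite -(ler_pXn2r (isT : (0 < 2)%N)) ?nnegrE ?normr_ge0 //.
    rewrite !norm_sub1 // lerD2l lerN2 ler_pM2l ?ltr0n //.
  have hpos2 : 0 < `|1 - x k| by apply: lt_le_trans hsq.
  rewrite -(ler_pM2l hpos2) mulr1 -normrM e //.
have claim1 : \sum_(k < q) G (x k) * (G (x k))^* = q%:R * q%:R.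
  have E1 (k : 'I_q) : G (x k) * (G (x k))^* =
      \sum_(j < q) \sum_(j' < q) (z0 ^+ j / z0 ^+ j') * (rho ^+ j / rho ^+ j') ^+ k.
    rewrite /G rmorph_sum big_distrl /=; apply: eq_bigr => j _.
    rewrite big_distrr /=; apply: eq_bigr => j' _.
    rewrite rmorphXn /= (unit_conj (nx k)) exprVn /x !exprMn invfM -!exprM mulrACA.
    by rewrite exprVn -exprM (mulnC k j) (mulnC k j').
  rewrite (eq_bigr _ (fun k _ => E1 k)) exchange_big /=.
  rewrite (eq_bigr (fun _ => q%:R)) ?sumr_const ?card_ord ?mulr_natr // => j _.
  rewrite exchange_big /= (bigD1 j) //= [X in _ + X]big1 ?addr0.
    rewrite !divff ?expf_neq0 // (eq_bigr (fun _ => 1)) ?sumr_const ?card_ord // => i _; by rewrite expr1n mulr1.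
  move=> j' jj'; rewrite -big_distrr /= geom_sum ?mulr0 //.
    by rewrite exprMn exprVn -!exprM !(mulnC _ q) !exprM rhoq !expr1n invr1 mulr1.
  apply: contra jj' => /eqP /divr1_eq /eqP.
  by rewrite (eq_prim_root_expr prho) !modn_small // => /eqP h; apply/eqP/val_inj.
have : \sum_(k < q) G (x k) * (G (x k))^* <= \sum_(k < q) (1 : algC).
  by apply: ler_sum => k _; apply: claim2.
rewrite claim1 sumr_const card_ord -natrM ler_nat. nia.
Qed.

Lemma root_max (n : nat) (a : algC) : (0 < n)%N -> a ^+ n = -1 ->
  'Re a <= 'Re (n.-root (-1)).
Proof.
move=> n0 an.
case: (ltnP 1 n) => [n1 | n1].
  have [hI | hI] := real_ge0P (Creal_Im a).
    exact: rootC_Re_max.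
  rewrite -Re_conj; apply: rootC_Re_max => //.
    by rewrite -rmorphXn an rmorphN1.
  by rewrite Im_conj oppr_ge0 ltW.
have e1 : n = 1%N by apply/eqP; rewrite eqn_leq n1 n0.
by subst n; rewrite root1C -an expr1.
Qed.

Lemma neq1N1 : (1 : algC) != -1.
Proof.
apply/eqP => h; have : (2 : algC) = 0 by rewrite -[2]/(1 + 1) {1}h addNr.
by move/eqP; rewrite pnatr_eq0.
Qed.

Lemma omega_prim (n : nat) : (0 < n)%N -> n.-primitive_root (n.-root (-1 : algC) ^+ 2).
Proof.
move=> n0; set y := n.-root (-1).
have yn : y ^+ n = -1 by rewrite /y rootCK.
have y2n : (y ^+ 2) ^+ n = 1 by rewrite exprAC yn sqrrN expr1n.
have [m pm mdn] := prim_order_exists n0 y2n.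
case: (eqVneq m n) => [<- // | mne].
exfalso.
have m0 := prim_order_gt0 pm.
have ym := prim_expr_order pm.
have n2 : (0 < 2 * n)%N by rewrite muln_gt0.
have ny : `|y| = 1 by apply: (norm_pow1 n0); rewrite yn normrN1.
have [k hk] := dvdnP mdn.
have k1 : (1 < k)%N.
  case: k hk => [|[|k]] hk //; first by move: n0; rewrite hk.
  by move: mne; rewrite hk mul1n eqxx.
have : (y ^+ m) ^+ 2 == 1 by rewrite exprAC ym.
rewrite sqrf_eq1 => /orP [/eqP h1 | /eqP hN1].
  by move: yn; rewrite hk mulnC exprM h1 expr1n => /eqP; rewrite (negbTE neq1N1).
have y1 : y != 1.
  by apply/eqP => h; move: yn; rewrite h expr1n => /eqP; rewrite (negbTE neq1N1).
have [z [zk hz]] := @rootQ y k ny y1 k1.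
have zn : z ^+ n = -1 by rewrite hk exprM zk hN1.
have := root_max n z n0 zn; rewrite -/y.
by move/(lt_le_trans hz); rewrite ltxx.
Qed.


Lemma sum_split (R : Type) (idx : R) (op : Monoid.law idx) (F : nat -> R) A B :
  \big[op/idx]_(n < A * B) F n = \big[op/idx]_(r < A) \big[op/idx]_(s < B) F (r * B + s)%N.
Proof.
elim: A => [|A IH]; first by rewrite mul0n !big_ord0.
rewrite big_ord_recr /= -IH mulSnr -!(big_mkord xpredT).
rewrite (big_cat_nat (leq0n (A * B)) (leq_addr B (A * B))) /=.
congr (op _ _).
rewrite -{1}[(A * B)%N]add0n big_addn addKn big_mkord.
by apply: eq_bigr => s _; rewrite addnC.
Qed.

Lemma pick_sum {N P : nat} {l : 'I_N -> 'I_P} (Y : 'I_N -> algC) (W : nat -> algC) :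
  injective l ->
  \sum_(s < P) (if [pick t : 'I_N | nat_of_ord (l t) == nat_of_ord s] is Some t then Y t else 0) * W s
  = \sum_(t < N) Y t * W (l t).
Proof.
move=> linj.
have e (s : 'I_P) : (if [pick t : 'I_N | nat_of_ord (l t) == nat_of_ord s] is Some t then Y t else 0) * W s
    = \sum_(t < N) (if l t == s then Y t * W s else 0).
  case: pickP => [t /eqP ht | hn].
    have ht' : l t = s by apply: val_inj.
    rewrite (bigD1 t) ?ht' ?eqxx //= big1 ?addr0 // => t' tt'.
    case: eqP => // ht2; move: tt'; rewrite -ht' in ht2.
    by rewrite (linj _ _ ht2) eqxx.
  rewrite mul0r big1 // => t _; case: eqP => // ht.
  by move: (hn t); rewrite ht eqxx.
rewrite (eq_bigr _ (fun s _ => e s)) exchange_big /=.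
apply: eq_bigr => t _.
rewrite -big_mkcond /=.
by rewrite (big_pred1 (l t)) // => s; rewrite eq_sym.
Qed.

Lemma sum_split' (R : Type) (idx : R) (op : Monoid.law idx) (F : nat -> R) A B :
  \big[op/idx]_(n < B * A) F n = \big[op/idx]_(r < A) \big[op/idx]_(s < B) F (r * B + s)%N.
Proof. by have := sum_split R idx op F A B; rewrite (mulnC A B). Qed.

Lemma mod2 N x : (x < 2 * N)%N -> (x %% N = if x < N then x else x - N)%N.
Proof.
move=> h; case: ltnP => h2; first by rewrite modn_small.
have -> : x = ((x - N) + N)%N by rewrite subnK.
by rewrite modnDr modn_small ?addnK //; lia.
Qed.

Lemma addI_spec N a b c : (a < N)%N -> (b < N)%N -> (c < N)%N ->
  ((a + N - c) %% N = (b + N - c) %% N)%N -> a = b.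
Proof. move=> ha hb hc; rewrite !mod2; [|lia|lia]. case: ifP; case: ifP; lia. Qed.

Lemma E_spec0 N g m : (0 < N)%N -> (g < N)%N -> (N %| g + m)%N = (g == (N - m %% N) %% N)%N.
Proof.
move=> N0 gN; rewrite /dvdn -modnDmr.
have := ltn_pmod m N0; set r := (m %% N)%N => hr.
rewrite mod2 ?mod2; [|lia|lia].
case: ifP; case: ifP; move=> *; apply/eqP/eqP; lia.
Qed.

Lemma geom_prim (N : nat) (w : algC) (a : nat) : N.-primitive_root w ->
  \sum_(r < N) (w ^+ a) ^+ r = if (N %| a)%N then N%:R else 0.
Proof.
move=> pw; rewrite (prim_order_dvd pw); case: eqP => [-> | h].
  by rewrite (eq_bigr (fun _ => 1)) ?sumr_const ?card_ord // => r _; rewrite expr1n.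
apply: geom_sum; last by apply/eqP.
by rewrite exprAC (prim_expr_order pw) expr1n.
Qed.

Lemma L1 {N a b} : (a < N)%N -> (b < N)%N -> ((a + (b + N - a) %% N) %% N = b)%N.
Proof. move=> ha hb; rewrite (mod2 _ (b + N - a)); last lia. case: ifP => h; rewrite mod2; try lia; case: ifP; lia. Qed.
Lemma L2 {N a b c d} : (a < N)%N -> (b < N)%N -> (c < N)%N -> (d < N)%N ->
  ((a + N - c) %% N = (b + N - d) %% N)%N -> ((c + (b + N - a) %% N) %% N = d)%N.
Proof.
move=> ha hb hc hd; rewrite (mod2 _ (a + N - c)); last lia; rewrite (mod2 _ (b + N - d)); last lia.
rewrite (mod2 _ (b + N - a)); last lia.
case: ifP => h1; case: ifP => h2; case: ifP => h3; move=> e; rewrite mod2; try lia; case: ifP; lia.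
Qed.
Lemma L3 {N a b} : (a < N)%N -> (b < N)%N -> a != b -> ((b + N - a) %% N != 0)%N.
Proof. move=> ha hb /eqP hab; rewrite mod2; last lia. case: ifP; lia. Qed.
Lemma L4 {N a b s} : (0 < N)%N -> (a < N)%N -> (b < N)%N -> (s < N)%N ->
  (s == (N - (a + b) %% N) %% N)%N = (((N - a) %% N + N - s) %% N == b)%N.
Proof.
move=> N0 ha hb hs. rewrite (mod2 _ (a + b)); last lia. rewrite (mod2 _ (N - a)); last lia.
case: ifP => h1; case: ifP => h2; rewrite ?mod2; try lia; repeat case: ifP; move=> *; apply/eqP/eqP; lia.
Qed.

Section CF.
Variables (N T K : nat) (pi : 'I_K -> {perm 'I_N}) (l : 'I_N -> 'I_(N + T)) (h : 'I_N -> 'I_N -> algC).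
Hypothesis N0 : (0 < N)%N.
Hypothesis linj : injective l.
Local Notation P := (N + T)%N.
Local Notation L := (N * (N + T))%N.

Lemma P0 : (0 < P)%N. Proof. by rewrite addn_gt0 N0. Qed.
Lemma L0 : (0 < L)%N. Proof. by rewrite muln_gt0 N0 P0. Qed.
Lemma pw : N.-primitive_root (omega N). Proof. exact: omega_prim N0. Qed.
Lemma pz : L.-primitive_root (omega L). Proof. exact: omega_prim L0. Qed.
Lemma peta : N.-primitive_root (omega L ^+ P).
Proof. by have := dvdn_prim_root pz (dvdn_mulr P (dvdnn N)); rewrite mulKn. Qed.
Lemma ptheta : P.-primitive_root (omega L ^+ N).
Proof. by have := dvdn_prim_root pz (dvdn_mull N (dvdnn P)); rewrite mulnK ?P0. Qed.

Definition kap : nat := val (sval (prim_rootP pw (prim_expr_order peta))).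
Lemma kapE : omega L ^+ P = omega N ^+ kap.
Proof. exact: (svalP (prim_rootP pw (prim_expr_order peta))). Qed.
Lemma kap_cop : coprime kap N.
Proof. by rewrite -(prim_root_exp_coprime _ pw) -kapE peta. Qed.

Definition E (t : nat) : 'I_N := Ordinal (ltn_pmod (N - (kap * t) %% N) N0).

Lemma E_spec (g t : nat) : (g < N)%N -> (N %| g + kap * t)%N = (g == E t)%N.
Proof. by move=> gN; rewrite E_spec0. Qed.

Lemma sqrt_const : (sqrtC (L%:R))^-1 * (sqrtC (P%:R / N%:R) * N%:R) = 1 :> algC.
Proof.
have Nn : (N%:R : algC) != 0 by rewrite pnatr_eq0 -lt0n.
have hN : (N%:R : algC) = sqrtC (N%:R ^+ 2) by rewrite sqrCK ?ler0n.
rewrite {2}hN -sqrtCM ?nnegrE ?divr_ge0 ?exprn_ge0 ?ler0n //.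
rewrite expr2 mulrA divfK // -natrM mulnC mulVf //.
by rewrite sqrtC_eq0 pnatr_eq0 -lt0n muln_gt0 N0 P0.
Qed.

Lemma useq_cf i c t : useq pi l h i c t =
   h c (pi i (E t)) * omega L ^+ (l (pi i (E t)) * t).
Proof.
rewrite /useq (sum_split _ _ _ (fun n => uhat pi l h i c n * omega L ^+ (n * t)) N P) /=.
have e1 (r : 'I_N) : \sum_(s < P) uhat pi l h i c (r * P + s) * omega L ^+ ((r * P + s) * t)
   = \sum_(t' < N) (sqrtC (P%:R / N%:R) * omega N ^+ (r * ginv pi i t') * h c t')
         * omega L ^+ ((r * P + l t') * t).
  rewrite -(pick_sum (fun t0 => sqrtC (P%:R / N%:R) * omega N ^+ (r * ginv pi i t0) * h c t0) (fun s => omega L ^+ ((r * P + s) * t)) linj).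
  apply: eq_bigr => s _.
  rewrite /uhat /dentry divnMDl ?P0 // divn_small // addn0 modnMDl modn_small //.
under eq_bigr do rewrite e1.
rewrite exchange_big /=.
have e2 (t' : 'I_N) : \sum_(r < N) (sqrtC (P%:R / N%:R) * omega N ^+ (r * ginv pi i t') * h c t')
         * omega L ^+ ((r * P + l t') * t)
   = (sqrtC (P%:R / N%:R) * h c t' * omega L ^+ (l t' * t)) *
       \sum_(r < N) (omega N ^+ (ginv pi i t' + kap * t)) ^+ r.
  rewrite big_distrr /=; apply: eq_bigr => r _.
  have ez : omega L ^+ (r * P * t) = omega N ^+ (kap * (r * t)).
    by rewrite mulnAC [(r * t * P)%N]mulnC exprM kapE -exprM.
  have ex : omega N ^+ (r * ginv pi i t') * omega N ^+ (kap * (r * t))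
      = omega N ^+ (ginv pi i t' + kap * t) ^+ r.
    by rewrite -exprD -exprM; congr (_ ^+ _); lia.
  rewrite mulnDl exprD ez -ex; ring.
under eq_bigr do rewrite e2 (geom_prim _ _ _ pw).
rewrite (bigD1 (pi i (E t))) //= [X in _ + X]big1 ?addr0.
  rewrite E_spec ?ltn_ord // /ginv permK eqxx.
  move: sqrt_const; set s1 := (sqrtC L%:R)^-1; set s2 := sqrtC (P%:R / N%:R) => hs.
  set hh := h c _; set zz := omega L ^+ _; set NN := (N%:R : algC).
  have -> : s1 * (s2 * hh * zz * NN) = (s1 * (s2 * NN)) * (hh * zz) by ring.
  by rewrite hs mul1r.
move=> t' ht'; rewrite E_spec ?ltn_ord //.
case: eqP => [he | _]; last by rewrite mulr0.
exfalso; move/negP: ht'; apply; apply/eqP.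
have : (pi i)^-1%g t' = E t by apply: val_inj.
by move=> <-; rewrite permKV.
Qed.

Lemma E_mod a b : (a = b %[mod N])%N -> E a = E b.
Proof. by move=> hab; apply: val_inj => /=; rewrite -modnMmr hab modnMmr. Qed.

Lemma z_unit : `|omega L| = 1.
Proof. exact: norm_root1 L0 (prim_expr_order pz). Qed.

Lemma z_pow_unit k : `|omega L ^+ k| = 1.
Proof. by rewrite normrX z_unit expr1n. Qed.

Lemma z_mod a b : (a = b %[mod L])%N -> omega L ^+ a = omega L ^+ b.
Proof. by move=> hab; rewrite -(prim_expr_mod pz a) -(prim_expr_mod pz b) hab. Qed.

Lemma z_neq0 k : omega L ^+ k != 0.
Proof. by rewrite expf_neq0 // -normr_eq0 z_unit oner_eq0. Qed.

Lemma theta_sum (a b : 'I_N) :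
  \sum_(y < P) (omega L ^+ (N * l a) / omega L ^+ (N * l b)) ^+ y = if a == b then P%:R else 0.
Proof.
case: eqP => [-> | hab].
  rewrite divff ?z_neq0 // (eq_bigr (fun _ => 1)) ?sumr_const ?card_ord // => y _.
  by rewrite expr1n.
apply: geom_sum.
  have ht k : (omega L ^+ (N * k)) ^+ P = 1.
    rewrite -exprM (_ : (N * k * P = k * L)%N); last by nia.
    by rewrite [(k * L)%N]mulnC exprM (prim_expr_order pz) expr1n.
  by rewrite exprMn exprVn !ht invr1 mulr1.
apply/negP => /eqP /divr1_eq /eqP; rewrite !exprM (eq_prim_root_expr ptheta).
rewrite !modn_small ?ltn_ord // => /eqP h1; apply: hab; apply: linj; exact: val_inj.
Qed.


Lemma corr_cf i i' c0 c1 tau :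
  pcorr L (useq pi l h i c0) (useq pi l h i' c1) tau =
  P%:R * \sum_(x < N) (if pi i (E x) == pi i' (E (x + tau)) then
      h c0 (pi i (E x)) * (h c1 (pi i (E x)))^* *
      (omega L ^+ (l (pi i (E x)) * x) / omega L ^+ (l (pi i (E x)) * (x + tau))) else 0).
Proof.
rewrite /pcorr.
pose G (t : nat) := h c0 (pi i (E t)) * (h c1 (pi i' (E (t + tau))))^* *
   (omega L ^+ (l (pi i (E t)) * t) / omega L ^+ (l (pi i' (E (t + tau))) * (t + tau))).
have e1 (t : nat) : useq pi l h i c0 t * (useq pi l h i' c1 ((t + tau) %% L))^* = G t.
  rewrite !useq_cf (@E_mod ((t + tau) %% L) (t + tau)); last by rewrite modn_dvdm // dvdn_mulr.
  rewrite (@z_mod (l _ * ((t + tau) %% L)) (l (pi i' (E (t+tau))) * (t + tau))); last by rewrite modnMmr.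
  by rewrite rmorphM /= rmorphXn /= (unit_conj z_unit) exprVn /G mulrACA.
under eq_bigr => t _ do rewrite e1.
rewrite (sum_split' _ _ _ G P N) exchange_big big_distrr /=.
apply: eq_bigr => x _.
have eA y : E (y * N + x)%N = E x by apply: E_mod; rewrite modnMDl.
have eB y : E (y * N + x + tau)%N = E (x + tau) by apply: E_mod; rewrite -addnA modnMDl.
set A := pi i (E x); set B := pi i' (E (x + tau)).
have eG y : G (y * N + x)%N = h c0 A * (h c1 B)^* *
    (omega L ^+ (l A * x) / omega L ^+ (l B * (x + tau))) *
    (omega L ^+ (N * l A) / omega L ^+ (N * l B)) ^+ y.
  rewrite /G eA eB -/A -/B -!mulrA; congr (_ * (_ * _)).
  set z := omega L.
  have e3 k : (k * (y * N) = N * k * y)%N by ring.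
  rewrite -addnA !mulnDr !exprD !e3 invfM expr_div_n -!exprM.
  ring.
under eq_bigr => y _ do rewrite eG.
rewrite -big_distrr /= theta_sum.
case: ifP => hAB; last by rewrite !mulr0.
by move/eqP: hAB => hAB; rewrite -hAB mulrC.
Qed.


Lemma E_eq a b : E a = E b -> (kap * a = kap * b %[mod N])%N.
Proof.
move/(congr1 val) => /=.
have ha := ltn_pmod (kap * a) N0; have hb := ltn_pmod (kap * b) N0.
rewrite (mod2 _ (N - _)); last lia. rewrite (mod2 _ (N - _)); last lia.
by case: ifP; case: ifP; lia.
Qed.

Lemma kap_cancel_le x y : (y <= x)%N -> (kap * x = kap * y %[mod N])%N -> (x = y %[mod N])%N.
Proof.
move=> hxy /eqP; rewrite eqn_mod_dvd ?leq_mul2l ?hxy ?orbT // -mulnBr.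
rewrite Gauss_dvdr; last by rewrite coprime_sym kap_cop.
by rewrite -eqn_mod_dvd // => /eqP.
Qed.

Lemma kap_cancel x y : (kap * x = kap * y %[mod N])%N -> (x = y %[mod N])%N.
Proof.
case: (leqP y x) => hxy; first exact: kap_cancel_le.
by move=> hk; apply/esym/kap_cancel_le => //; apply: ltnW.
Qed.

Lemma E_ord_inj : injective (fun x : 'I_N => E x).
Proof.
move=> x y /E_eq /kap_cancel; rewrite !modn_small ?ltn_ord // => hxy.
exact: val_inj.
Qed.

Lemma E_tau x tau : E x = E (x + tau) -> (N %| tau)%N.
Proof.
move/E_eq; rewrite mulnDr -{1}[(kap * x)%N]addn0 => /eqP; rewrite eqn_modDl => /eqP.
rewrite mod0n => /esym/eqP; rewrite -/(dvdn N _) Gauss_dvdr //.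
by rewrite coprime_sym kap_cop.
Qed.

Lemma corr_same i c0 c1 tau : (0 < tau < N)%N ->
  pcorr L (useq pi l h i c0) (useq pi l h i c1) tau = 0.
Proof.
move=> /andP [t0 tN]; rewrite corr_cf big1 ?mulr0 // => x _.
case: ifP => //; rewrite (inj_eq perm_inj) => /eqP /E_tau hd.
by move: (dvdn_leq t0 hd); rewrite leqNgt tN.
Qed.

Lemma corr_zero i c0 c1 : c0 != c1 ->
  (\sum_(s < N) h c0 s * (h c1 s)^* = 0) ->
  pcorr L (useq pi l h i c0) (useq pi l h i c1) 0 = 0.
Proof.
move=> hc horth; rewrite corr_cf.
have e (x : 'I_N) : (if pi i (E x) == pi i (E (x + 0)) then
      h c0 (pi i (E x)) * (h c1 (pi i (E x)))^* *
      (omega L ^+ (l (pi i (E x)) * x) / omega L ^+ (l (pi i (E x)) * (x + 0))) else 0)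
    = (fun s => h c0 s * (h c1 s)^*) (pi i (E x)).
  by rewrite addn0 eqxx divff ?z_neq0 // mulr1.
rewrite (eq_bigr _ (fun x _ => e x)).
have finj : injective (fun x : 'I_N => pi i (E x)).
  by move=> x y /perm_inj /E_ord_inj.
by rewrite -(@reindex_inj _ _ _ _ _ xpredT (fun s => h c0 s * (h c1 s)^*) finj) /= horth mulr0.
Qed.


Lemma corr_inter i i' c0 c1 tau : is_CFR pi -> i != i' -> (forall c s, `|h c s| = 1) ->
  `|pcorr L (useq pi l h i c0) (useq pi l h i' c1) tau| = P%:R.
Proof.
move=> hcfr hii hh.
pose sg (w : 'I_N) : 'I_N := (pi i')^-1%g (pi i w).
pose phi (w : 'I_N) : 'I_N := Ordinal (ltn_pmod (w + N - sg w) N0).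
have phi_inj : injective phi.
  move=> w1 w2 /(congr1 val) /= he.
  case: (eqVneq w1 w2) => // hne; exfalso.
  pose m : 'I_N := Ordinal (ltn_pmod (w2 + N - w1) N0).
  have hm : nat_of_ord m != 0%N := L3 (ltn_ord w1) (ltn_ord w2) hne.
  have e1 : addI w1 m = w2 by apply: val_inj; rewrite /= L1.
  have e2 : addI (sg w1) m = sg w2.
    by apply: val_inj; rewrite /= (L2 (ltn_ord w1) (ltn_ord w2) (ltn_ord (sg w1)) (ltn_ord (sg w2)) he).
  have := (hcfr m hm i i' w1 (sg w1)).1.
  rewrite e1 e2 /sg !permKV => /(_ erefl) [hi _].
  by move/eqP: hii.
pose tgt : 'I_N := Ordinal (ltn_pmod (kap * tau) N0).
have hcond (x : 'I_N) : (pi i (E x) == pi i' (E (x + tau))) = (phi (E x) == tgt).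
  rewrite -(inj_eq (@perm_inj _ (pi i')^-1%g)) permK -!val_eqE /=.
  rewrite mulnDr -modnDm L4 ?ltn_pmod ?ltn_ord //.
pose psi (x : 'I_N) := phi (E x).
have psi_inj : injective psi by move=> x y /phi_inj /E_ord_inj.
pose x0 := (perm psi_inj)^-1%g tgt.
have hx (x : 'I_N) : (phi (E x) == tgt) = (x == x0).
  have <- : psi x0 = tgt by rewrite /x0 -[psi _]permE permKV.
  by rewrite (inj_eq psi_inj).
rewrite corr_cf.
under eq_bigr => x _ do rewrite hcond hx.
rewrite -big_mkcond big_pred1_eq.
rewrite normrM normr_nat !normrM norm_conjC !hh normfV !z_pow_unit.
by rewrite invr1 !mulr1.
Qed.


Lemma w_pow_unit k : `|omega N ^+ k| = 1.
Proof. by rewrite normrX (norm_root1 N0 (prim_expr_order pw)) expr1n. Qed.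

Lemma useq_unit i c t : (forall c s, `|h c s| = 1) -> `|useq pi l h i c t| = 1.
Proof. by move=> hh; rewrite useq_cf normrM hh z_pow_unit mulr1. Qed.

Lemma uhat_om (I : {set 'I_P}) (hI : forall k : 'I_P, k \notin I <-> exists t, l t = k)
  (hh : forall c s, `|h c s| = 1) i c (n : 'I_L) :
  (n \in OmegaSet N I -> uhat pi l h i c n = 0) /\
  (n \notin OmegaSet N I -> `|uhat pi l h i c n| = sqrtC (P%:R / N%:R)).
Proof.
split.
  rewrite inE => /existsP [s /existsP [a /andP [sI /eqP hn]]].
  have hmod : (n %% P)%N = s by rewrite hn addnC modnMDl modn_small.
  rewrite /uhat /dentry hmod; case: pickP => [t /eqP ht | //]; exfalso.
  have hts : l t = s by apply: val_inj.
  by move: sI; apply/negP; apply/(hI s).2; exists t.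
move=> hn; pose s : 'I_P := Ordinal (ltn_pmod n P0).
have sI : s \notin I.
  apply/negP => sI; move/negP: hn; apply; rewrite inE; apply/existsP; exists s.
  have hdiv : (n %/ P < N)%N by rewrite ltn_divLR ?P0 // ltn_ord.
  apply/existsP; exists (Ordinal hdiv); rewrite sI /=.
  by apply/eqP; rewrite /= [(n %% P + _)%N]addnC; apply: divn_eq.
have [t ht] := (hI s).1 sI.
rewrite /uhat /dentry; case: pickP => [t' _ | hnone].
  rewrite !normrM ger0_norm ?sqrtC_ge0 ?divr_ge0 ?ler0n // hh w_pow_unit.
  by rewrite !mulr1.
by move: (hnone t); rewrite ht eqxx.
Qed.

Lemma om_bound (s : 'I_P) (a : 'I_N) : (s + a * P < L)%N.
Proof. have := ltn_ord s; have := ltn_ord a; nia. Qed.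

Lemma card_om (I : {set 'I_P}) : #|OmegaSet N I| = (#|I| * N)%N.
Proof.
pose f (p : 'I_P * 'I_N) : 'I_L := Ordinal (om_bound p.1 p.2).
have finj : injective f.
  move=> [s a] [s' a'] /(congr1 val) /= e.
  have e1 : s = s'.
    apply: val_inj => /=; move: (congr1 (fun m => m %% P)%N e).
    by rewrite !(addnC _ (_ * P)) !modnMDl !modn_small.
  subst s'; have : a = a' :> nat by move/eqP: e; rewrite eqn_add2l eqn_mul2r gtn_eqF ?P0 // => /eqP.
  by move/val_inj => ->.
have -> : OmegaSet N I = f @: (setX I setT).
  apply/setP => n; rewrite inE; apply/existsP/imsetP.
    move=> [s /existsP [a /andP [sI /eqP hn]]].
    exists (s, a); first by rewrite in_setX sI in_setT.
    by apply: val_inj.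
  move=> [[s a]]; rewrite in_setX in_setT andbT /= => sI ->.
  by exists s; apply/existsP; exists a; rewrite sI /=.
by rewrite card_imset // cardsX cardsT card_ord.
Qed.

End CF.

Theorem theorem7 (N K T : nat) (pi : 'I_K -> {perm 'I_N})
    (I : {set 'I_(N + T)}) (l : 'I_N -> 'I_(N + T))
    (h : 'I_N -> 'I_N -> algC) :
  (3 <= N)%N -> odd N -> is_Ftilde N K -> is_CFR pi ->
  (1 <= T)%N -> #|I| = T ->
  (forall t t' : 'I_N, (t < t')%N -> (l t < l t')%N) ->
  (forall k : 'I_(N + T), k \notin I <-> exists t, l t = k) ->
  (forall c s, `|h c s| = 1) ->
  (forall c0 c1, c0 != c1 -> \sum_(s < N) h c0 s * (h c1 s)^* = 0) ->
  let P := (N + T)%N in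
  let L := (N * P)%N in
  let U := useq pi l h in
  let Om := OmegaSet N I in
  (* (0) unimodularity *)
  (forall i c (t : nat), (t < L)%N -> `|U i c t| = 1) /\
  (* (1) spectral nulls on Omega, constant modulus elsewhere *)
  (forall i c (n : 'I_L),
      (n \in Om -> uhat pi l h i c n = 0) /\
      (n \notin Om -> `|uhat pi l h i c n| = sqrtC (P%:R / N%:R))) /\
  (* (2) each U^i is an (N, NP, N)-ZCZ set *)
  (forall i c (tau : nat), (0 < tau < N)%N -> pcorr L (U i c) (U i c) tau = 0) /\
  (forall i c0 c1 (tau : nat), c0 != c1 -> (tau < N)%N ->
      pcorr L (U i c0) (U i c1) tau = 0) /\
  (L - #|Om| = N ^ 2 /\ N ^ 2 = N * N)%N /\
  (* (3) inter-set cross-correlation *)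
  (forall i i' c0 c1 (tau : nat), i != i' -> (tau < L)%N ->
      `|pcorr L (U i c0) (U i' c1) tau| = (P%:R : algC) /\
      (P%:R : algC) = L%:R / sqrtC (L - #|Om|)%:R).
Proof.
move=> hN hodd hF hcfr hT hI hmono hIl hh horth.
cbv zeta.
have N0 : (0 < N)%N by apply: leq_trans hN.
have linj : injective l.
  move=> t t' e; apply: val_inj; case: (ltngtP t t') => [hlt|hlt|//].
    by have := hmono _ _ hlt; rewrite e ltnn.
  by have := hmono _ _ hlt; rewrite e ltnn.
have hom : (N * (N + T) - #|OmegaSet N I| = N * N)%N.
  by rewrite card_om // hI mulnDr [(T * N)%N]mulnC addnK.
split; [|split; [|split; [|split; [|split]]]].
- by move=> i c t _; apply: useq_unit.
- by move=> i c n; apply: uhat_om.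
- by move=> i c tau htau; apply: corr_same.
- move=> i c0 c1 tau hc htau; case: (posnP tau) => [-> | tpos].
    by apply: corr_zero => //; apply: horth.
  by apply: corr_same => //; rewrite tpos htau.
- by rewrite hom mulnn.
- move=> i i' c0 c1 tau hii htau; split; first by apply: corr_inter.
  rewrite hom [(N * N)%:R]natrM -expr2 sqrCK ?ler0n // [(N * (N + T))%:R]natrM [N%:R * _]mulrC mulfK //.
  by rewrite pnatr_eq0 -lt0n.
Qed.
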